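(* For every integer $r\geq 3$ there exist an $r$-connected $r$-regular graph $G$ of even order and a set $\mathcal O$ of pairwise vertex-disjoint odd cycles of $G$ with the following property: if $t$ is a positive integer and $F$ is a $t$-factor of $G$ with $E(F) \cap E(O) \neq \emptyset$ for every $O \in \mathcal{O}$, then $t \geq \frac{r}{3}$.
   Context: Graphs are finite and loopless. A cycle is a connected $2$-regular subgraph; it is odd if it has an odd number of edges. A $t$-factor of $G$ is a spanning $t$-regular subgraph. $r$-connected means $G$ has more than $r$ vertices and remains connected after deleting any fewer than $r$ vertices. *)

(* Defs.v *)
(* Simple graphs on a finite type V: a symmetric irreflexive
   relation e. Subgraphs are given by their edge sets, edges being 2-element
   vertex sets {x,y}. *)
From mathcomp Require Import all_boot.
Set Implicit Arguments. Unset Strict Implicit. Unset Printing Implicit Defensive.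

Section Graphs.
Variable V : finType.

Definition simple_graph (e : rel V) : Prop := symmetric e /\ irreflexive e.

Definition edges (e : rel V) : {set {set V}} :=
  [set E : {set V} | [exists x, exists y, e x y && (E == [set x; y])]].

Definition regular (e : rel V) (r : nat) : Prop :=
  forall v : V, #|[set w | e v w]| = r.

Definition connected_minus (e : rel V) (S : {set V}) : Prop :=
  forall x y, x \notin S -> y \notin S ->
    connect [rel a b | e a b && (a \notin S) && (b \notin S)] x y.

Definition r_connected (e : rel V) (r : nat) : Prop :=
  r < #|V| /\ forall S : {set V}, #|S| < r -> connected_minus e S.

Definition sdeg (D : {set {set V}}) (v : V) : nat := #|[set E in D | v \in E]|.

(* D is the edge set of a cycle of G: a connected 2-regular subgraph
   (vertex set = cover D, since a cycle has no isolated vertices) *)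
Definition is_cycle (e : rel V) (D : {set {set V}}) : Prop :=
  [/\ D \subset edges e, D != set0,
      forall v, v \in cover D -> sdeg D v = 2
    & forall x y, x \in cover D -> y \in cover D ->
        connect [rel a b | [set a; b] \in D] x y].

Definition is_odd_cycle (e : rel V) (D : {set {set V}}) : Prop :=
  is_cycle e D /\ odd #|D|.

Definition is_factor (e : rel V) (t : nat) (F : {set {set V}}) : Prop :=
  F \subset edges e /\ forall v : V, sdeg F v = t.

End Graphs.

(* Main.v *)
Require Import Defs.
From mathcomp Require Import all_boot zify.
Set Implicit Arguments. Unset Strict Implicit. Unset Printing Implicit Defensive.

Lemma connect_homo (T U : finType) (R1 : rel T) (R2 : rel U) (h : T -> U) a b :
  (forall x y, R1 x y -> R2 (h x) (h y)) -> connect R1 a b -> connect R2 (h a) (h b).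
Proof.
move=> H /connectP [p]; elim: p a => [|c p IH] a /=; first by move=> _ ->.
case/andP=> Hac Hp Hb; apply: connect_trans (connect1 (H _ _ Hac)) (IH _ Hp Hb).
Qed.

Lemma ctrans (T : finType) (e : rel T) x y z :
  connect e x y -> connect e y z -> connect e x z.
Proof. exact: connect_trans. Qed.

Section Transfer.
Variables (T U : finType) (h : T -> U) (hinj : injective h) (e1 : rel T) (e2 : rel U).
Hypothesis He : forall x y, e2 (h x) (h y) = e1 x y.

Definition Phi (D : {set {set T}}) : {set {set U}} := [set h @: E | E : {set T} in D].

Lemma imset2h x y : h @: [set x; y] = [set h x; h y].
Proof. by rewrite imsetU1 imset_set1. Qed.

Lemma mem_Phi (D : {set {set T}}) (E : {set T}) : (h @: E \in Phi D) = (E \in D).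
Proof. by rewrite mem_imset //; apply: imset_inj. Qed.

Lemma card_Phi (D : {set {set T}}) : #|Phi D| = #|D|.
Proof. by rewrite card_imset //; apply: imset_inj. Qed.

Lemma Phi_edges (D : {set {set T}}) : D \subset edges e1 -> Phi D \subset edges e2.
Proof.
move=> /subsetP sD; apply/subsetP => E' /imsetP [E /sD]; rewrite inE.
case/existsP=> x /existsP [y /andP [exy /eqP ->]] ->.
rewrite inE; apply/existsP; exists (h x); apply/existsP; exists (h y).
by rewrite He exy imset2h eqxx.
Qed.

Lemma sdeg_Phi (D : {set {set T}}) v : sdeg (Phi D) (h v) = sdeg D v.
Proof.
rewrite /sdeg -(card_Phi [set E in D | v \in E]).
suff -> : [set E in Phi D | h v \in E] = Phi [set E in D | v \in E] by [].
apply/setP => E'; rewrite inE; apply/andP/imsetP.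
  case=> /imsetP [E ED ->]; rewrite mem_imset // => vE.
  by exists E => //; rewrite inE ED.
case=> E; rewrite inE => /andP [ED vE] ->.
by rewrite mem_Phi mem_imset.
Qed.

Lemma cover_Phi (D : {set {set T}}) : cover (Phi D) = h @: cover D.
Proof.
apply/setP => x; apply/bigcupP/imsetP.
  case=> E' /imsetP [E ED ->] /imsetP [y yE ->].
  by exists y => //; apply/bigcupP; exists E.
case=> y /bigcupP [E ED yE] ->; exists (h @: E); first by rewrite mem_Phi.
exact: imset_f.
Qed.

End Transfer.

Definition Good (T : finType) (e : rel T) (r : nat) : Prop :=
  [/\ simple_graph e, r_connected e r, regular e r, ~~ odd #|T| &
    exists Os : {set {set {set T}}},
      [/\ forall O, O \in Os -> is_odd_cycle e O,
          forall O1 O2, O1 \in Os -> O2 \in Os -> O1 != O2 ->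
            [disjoint cover O1 & cover O2]
        & forall (t : nat) (F : {set {set T}}),
            0 < t -> is_factor e t F ->
            (forall O, O \in Os -> F :&: O != set0) ->
            r <= 3 * t]].

Section Transfer2.
Variables (T U : finType) (h : T -> U) (g : U -> T).
Hypotheses (hK : cancel h g) (gK : cancel g h).
Variable e1 : rel T.
Let e2 : rel U := fun x y => e1 (g x) (g y).
Let hinj : injective h := can_inj hK.
Let ginj : injective g := can_inj gK.
Let He : forall x y, e2 (h x) (h y) = e1 x y.
Proof. by move=> x y; rewrite /e2 !hK. Qed.
Let He' : forall x y, e1 (g x) (g y) = e2 x y.
Proof. by []. Qed.

Lemma cycle_Phi O : is_odd_cycle e1 O -> is_odd_cycle e2 (Phi h O).
Proof.
case=> [[sO nO dO cO] oO]; split; last by rewrite (card_Phi hinj).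
split.
- exact: (Phi_edges He sO).
- by rewrite -card_gt0 (card_Phi hinj) card_gt0.
- move=> v; rewrite (cover_Phi hinj) => /imsetP [w wO ->]; rewrite (sdeg_Phi hinj); exact: dO.
- move=> x y; rewrite (cover_Phi hinj) => /imsetP [a aO ->] /imsetP [b bO ->].
  apply: connect_homo (cO _ _ aO bO) => u w /=.
  by rewrite -imset2h (mem_Phi hinj).
Qed.

Lemma Good_transfer r : Good e1 r -> Good e2 r.
Proof.
have cardTU : #|T| = #|U| by apply: (bij_eq_card (f:=h)); exists g.
case=> [[sym irr] [rV cn] reg ev [Os [cyc dis fac]]]; split.
- split; first by move=> x y; rewrite /e2 sym.
  by move=> x; rewrite /e2 irr.
- split; first by rewrite -cardTU.
  move=> S Sr x y xS yS.
  have cS : #|g @: S| < r by apply: leq_ltn_trans (leq_imset_card _ _) Sr.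
  have nS z : (g z \in g @: S) = (z \in S) by rewrite mem_imset.
  rewrite -(gK x) -(gK y); apply: connect_homo (cn _ cS (g x) (g y) _ _);
    last by rewrite nS. 2: by rewrite nS.
  move=> a b /= /andP [/andP [eab aS] bS]; rewrite He eab.
  by rewrite -nS hK aS -nS hK bS.
- move=> v; rewrite -(reg (g v)).
  suff -> : [set w | e2 v w] = h @: [set w | e1 (g v) w] by rewrite card_imset.
  apply/setP => w; rewrite inE -{2}(gK w) mem_imset // inE.
  by [].
- by rewrite -cardTU.
exists [set Phi h O | O in Os]; split.
- by move=> O' /imsetP [O OO ->]; apply: cycle_Phi; apply: cyc.
- move=> O1' O2' /imsetP [O1 O1O ->] /imsetP [O2 O2O ->] ne.
  rewrite !(cover_Phi hinj) imset_disjoint //; apply: dis => //.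
  by apply: contraNneq ne => ->.
- move=> t F t0 [sF dF] hit.
  apply: (fac t (Phi g F) t0).
    split; first exact: (Phi_edges He' sF).
    by move=> v; rewrite -{1}(hK v) (sdeg_Phi ginj).
  move=> O OO; have := hit (Phi h O) (imset_f _ OO).
  case/set0Pn => E /setIP [EF /imsetP [E0 E0O EE0]].
  apply/set0Pn; exists E0; rewrite inE E0O andbT.
  have -> : E0 = g @: E.
    by rewrite EE0 -imset_comp (eq_imset _ hK) imset_id.
  by rewrite (mem_Phi ginj).
Qed.

End Transfer2.

Lemma tri_cycle (V : finType) (e : rel V) (K : {set V}) :
  #|K| = 3 -> {in K &, forall x y, x != y -> e x y} ->
  is_odd_cycle e [set K :\ x | x in K] /\ cover [set K :\ x | x in K] = K.
Proof.
move=> K3 cl.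
have inj : {in K &, injective (fun x => K :\ x)}.
  move=> x y xK yK /= Exy; apply/eqP; apply/negPn/negP => nxy.
  have : x \in K :\ y by rewrite !inE nxy.
  by rewrite -Exy !inE eqxx.
have c2 x : x \in K -> #|K :\ x| = 2.
  by move=> xK; move: K3; rewrite (cardsD1 x) xK => -[].
have cov : cover [set K :\ x | x in K] = K.
  apply/setP => v; apply/bigcupP/idP.
    by case=> E /imsetP [x xK ->]; rewrite inE => /andP [].
  move=> vK; have : 0 < #|K :\ v| by rewrite c2.
  rewrite card_gt0 => /set0Pn [x]; rewrite !inE => /andP [xv xK].
  exists (K :\ x); first exact: imset_f.
  by rewrite !inE eq_sym xv vK.
split=> //; split; last by rewrite card_in_imset // K3.
split.
- apply/subsetP => E /imsetP [x xK ->].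
  move/eqP: (c2 x xK) => /cards2P [y [z [yz Eyz]]].
  have yK : y \in K by have := set21 y z; rewrite -Eyz inE => /andP [].
  have zK : z \in K by have := set22 y z; rewrite -Eyz inE => /andP [].
  rewrite inE; apply/existsP; exists y; apply/existsP; exists z.
  by rewrite cl // Eyz eqxx.
- rewrite -card_gt0 card_in_imset // K3 //.
- move=> v; rewrite cov => vK; rewrite /sdeg.
  suff -> : [set E in [set K :\ x | x in K] | v \in E] = [set K :\ x | x in K :\ v].
    rewrite card_in_imset ?c2 // => x y /setD1P [_ xK] /setD1P [_ yK]; exact: inj.
  apply/setP => E; rewrite inE; apply/andP/imsetP.
    case=> /imsetP [x xK ->]; rewrite !inE => /andP [vx _].
    by exists x => //; rewrite !inE eq_sym vx.
  case=> x; rewrite !inE => /andP [xv xK] ->; split; first exact: imset_f.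
  by rewrite !inE eq_sym xv.
- move=> x y; rewrite cov => xK yK.
  have [<-|xy] := eqVneq x y; first exact: connect0.
  have : 0 < #|K :\ x :\ y|.
    have yx : y != x by rewrite eq_sym.
    by move: (c2 x xK); rewrite (cardsD1 y) !inE yx yK add1n => -[->].
  rewrite card_gt0 => /set0Pn [z]; rewrite !inE => /andP [zy /andP [zx zK]].
  apply: connect1 => /=.
  suff -> : [set x; y] = K :\ z by apply: imset_f.
  apply/eqP; rewrite eqEcard c2 // cards2 xy andbT.
  by apply/subsetP => w; rewrite !inE => /orP [] /eqP ->; rewrite ?xK ?yK andbT 1?eq_sym.
Qed.

Lemma wsum (V : finType) (F : {set {set V}}) (w : V -> nat) :
  \sum_v w v * sdeg F v = \sum_(E in F) \sum_(v in E) w v.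
Proof.
rewrite /sdeg.
transitivity (\sum_v \sum_(E in F) (if v \in E then w v else 0)).
  apply: eq_bigr => v _; rewrite -sum1_card big_distrr /=.
  rewrite (eq_bigl (fun E => (E \in F) && (v \in E))); last by move=> E; rewrite inE.
  by rewrite big_mkcondr /=; apply: eq_bigr => E _; case: (v \in E); rewrite ?muln1.
rewrite exchange_big /=; apply: eq_bigr => E _.
by rewrite [RHS]big_mkcond.
Qed.

Lemma sum_set2 (V : finType) (w : V -> nat) x y : x != y ->
  \sum_(v in [set x; y]) w v = w x + w y.
Proof.
move=> xy; rewrite (bigD1 x) ?set21 //=; congr (_ + _).
rewrite (bigD1 y) /=; last by rewrite !inE eqxx orbT eq_sym xy.
rewrite big1 ?addn0 // => v /andP [/andP [vin vx] vy].
by move: vin; rewrite !inE (negbTE vx) (negbTE vy).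
Qed.

Lemma card_sum_set (A B : finType) (P : pred (A + B)) :
  #|[set w | P w]| = #|[set a | P (inl a)]| + #|[set b | P (inr b)]|.
Proof.
rewrite -!sum1_card big_sumType; congr (_ + _); apply: eq_bigl => x; by rewrite !inE.
Qed.

Section Main.
Variable s : nat.
Hypothesis s0 : 0 < s.

Definition Tt := (('I_3 * 'I_s.+2) + ('I_3 * 'I_s))%type.

Definition eT : rel Tt := fun x y =>
  match x, y with
  | inl a, inl b => (a.2 == b.2) && (a.1 != b.1)
  | inl a, inr b => a.1 == b.1
  | inr a, inl b => a.1 == b.1
  | inr _, inr _ => false
  end.

Lemma eT_sym : symmetric eT.
Proof. by rewrite /eT; case=> [[j i]|[j i]] [[k l]|[k l]] //=; rewrite eq_sym // [k == j]eq_sym. Qed.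

Lemma eT_irr : irreflexive eT.
Proof. by rewrite /eT; case=> [[j i]|[j i]] /=; rewrite ?eqxx ?andbF. Qed.

Lemma eT_reg : regular eT s.+2.
Proof.
case=> [[j i]|[j q]]; rewrite card_sum_set /=.
- have -> : [set a : 'I_3 * 'I_s.+2 | (i == a.2) && (j != a.1)] = setX [set~ j] [set i].
    by apply/setP => -[j' i']; rewrite !inE /= eq_sym [j' == j]eq_sym andbC.
  have -> : [set b : 'I_3 * 'I_s | j == b.1] = setX [set j] setT.
    by apply/setP => -[j' i']; rewrite !inE /= eq_sym andbT.
  by rewrite !cardsX cardsC1 !cards1 cardsT !card_ord muln1 mul1n.
- have -> : [set a : 'I_3 * 'I_s.+2 | j == a.1] = setX [set j] setT.
    by apply/setP => -[j' i']; rewrite !inE /= eq_sym andbT.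
  have -> : [set b : 'I_3 * 'I_s | false] = set0 by apply/setP => b; rewrite !inE.
  by rewrite cardsX cards1 cardsT card_ord cards0 mul1n addn0.
Qed.


Definition isA (v : Tt) : bool := if v is inl _ then true else false.
Definition AA (E : {set Tt}) : bool := E \subset [set v | isA v].

Lemma edge_count E : E \in edges eT ->
  \sum_(v in E) (isA v : nat) = \sum_(v in E) (~~ isA v : nat) + 2 * AA E.
Proof.
rewrite inE => /existsP [x /existsP [y /andP [exy /eqP ->]]].
have xy : x != y by apply: contraTneq exy => ->; rewrite eT_irr.
rewrite !sum_set2 // /AA subUset !sub1set !inE.
by move: exy {xy}; case: x => [a|a]; case: y => [b|b].
Qed.

Definition Kt (i : 'I_s.+2) : {set Tt} := [set inl (j, i) | j : 'I_3].
Definition Ot i := [set Kt i :\ x | x in Kt i].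
Definition Ost := [set Ot i | i : 'I_s.+2].

Lemma Kt3 i : #|Kt i| = 3.
Proof. by rewrite card_imset ?card_ord // => j j' [->]. Qed.

Lemma Kt_clique i : {in Kt i &, forall x y, x != y -> eT x y}.
Proof.
move=> x y /imsetP [j _ ->] /imsetP [j' _ ->] ne /=.
by rewrite eqxx /=; apply: contraNneq ne => ->.
Qed.

Lemma Ot_cycle i : is_odd_cycle eT (Ot i) /\ cover (Ot i) = Kt i.
Proof. exact: tri_cycle (Kt3 i) (@Kt_clique i). Qed.

Lemma Kt_disj i i' : i != i' -> [disjoint Kt i & Kt i'].
Proof.
move=> ne; rewrite -setI_eq0; apply/eqP/setP => x; rewrite !inE.
apply/negP => /andP [/imsetP [j _ ->] /imsetP [j' _ [_ eq]]].
by move: ne; rewrite eq eqxx.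
Qed.

Lemma factor_bound t F : is_factor eT t F ->
  (forall O, O \in Ost -> F :&: O != set0) -> s.+2 <= 3 * t.
Proof.
case=> sF dF hit.
have SA := wsum F (fun v => nat_of_bool (isA v)).
have SB := wsum F (fun v => nat_of_bool (~~ isA v)).
have eF : \sum_(E in F) \sum_(v in E) (isA v : nat) =
          \sum_(E in F) \sum_(v in E) (~~ isA v : nat) + 2 * \sum_(E in F) (AA E : nat).
  rewrite big_distrr -big_split /=; apply: eq_bigr => E EF.
  by apply: edge_count; apply: (subsetP sF).
have st (w : Tt -> nat) : \sum_v w v * sdeg F v = \sum_v w v * t.
  by apply: eq_bigr => v _; rewrite dF.
rewrite -SA -SB !st -!big_distrl /= in eF.
move: eF; rewrite !big_sumType /=.
rewrite !sum_nat_const /= !muln1 !muln0 !addn0 !add0n !card_prod !card_ord.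
set X := \sum_(E in F) (AA E : nat) => eqX.
suff cnt : s.+2 <= X.
  have e6 : 6 * t = 2 * X.
    apply/eqP; rewrite -(eqn_add2l (3 * s * t)) -eqX.
    apply/eqP; nia.
  lia.
have -> : X = #|[set E in F | AA E]|.
  rewrite /X -sum1_card big_mkcond [RHS]big_mkcond /=; apply: eq_bigr => E _.
  by rewrite !inE; case: (E \in F); case: (AA E).
pose f i := odflt set0 [pick E in F :&: Ot i].
have fP i : f i \in F :&: Ot i.
  rewrite /f; case: pickP => [E EP|none] //=.
  have := hit (Ot i) (imset_f _ (erefl true)); case/set0Pn => E EF.
  by move: (none E); rewrite EF.
have OtK i E : E \in Ot i -> E \subset Kt i /\ E != set0.
  case/imsetP => x xK ->; split; first exact: subD1set.
  by rewrite -card_gt0; move: (Kt3 i); rewrite (cardsD1 x (Kt i)) xK add1n => -[->].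
have KA i : Kt i \subset [set v | isA v].
  by apply/subsetP => v /imsetP [j _ ->]; rewrite inE.
have finj : injective f.
  move=> i i' fii; apply/eqP/negPn/negP => ne.
  have /setIP [_ /OtK [s1 n1]] := fP i; have /setIP [_ /OtK [s2 _]] := fP i'.
  case/set0Pn: n1 => x xE.
  move: (Kt_disj ne); rewrite -setI_eq0 => /eqP/setP/(_ x).
  by rewrite !inE (subsetP s1 _ xE) (subsetP s2) // -fii.
apply: (@leq_trans #|[set f i | i : 'I_s.+2]|).
  by rewrite card_imset // card_ord.
apply: subset_leq_card; apply/subsetP => E /imsetP [i _ ->].
have /setIP [fF /OtK [fK _]] := fP i.
by rewrite inE fF; apply: subset_trans fK (KA i).
Qed.

Definition idx (v : Tt) : 'I_3 := match v with inl a => a.1 | inr b => b.1 end.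
Definition pos (v : Tt) : 'I_s.+2 := match v with inl a => a.2 | inr _ => ord0 end.

Lemma eT_conn : r_connected eT s.+2.
Proof.
split.
  rewrite card_sum !card_prod !card_ord; lia.
move=> S Ss x y xS yS.
set R := [rel a b | eT a b && (a \notin S) && (b \notin S)].
have Rsym : symmetric R.
  by move=> a b /=; rewrite eT_sym -!andbA; congr (_ && _); rewrite andbC.
have C1 (a b : Tt) : R a b -> connect R a b by move=> h; apply: connect1.
have [i0 Hi0] : exists i0, forall j, inl (j, i0) \notin S.
  case: (pickP (fun i => i \notin pos @: S)) => [i0 Hi0 | none].
    exists i0 => j; apply: contra Hi0 => jS.
    by apply/imsetP; exists (inl (j, i0)).
  have : [set: 'I_s.+2] \subset pos @: S.
    by apply/subsetP => i _; move: (none i) => /= /negbFE.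
  move/subset_leq_card; rewrite cardsT card_ord => H.
  by have := leq_trans H (leq_imset_card _ _); rewrite leqNgt Ss.
pose h0 : Tt := inl (ord0, i0).
have tri j : connect R (inl (j, i0)) h0.
  have [->|ne] := eqVneq j ord0; first exact: connect0.
  by apply: C1; rewrite /= eqxx ne !Hi0.
have hub u : u \notin S -> connect R u h0.
  case: u => [[j i]|[j q]] uS.
    case: (pickP (fun q => inr (j, q) \notin S)) => [q qS | none].
      apply: ctrans _ (tri j).
      have r1 : R (inl (j, i)) (inr (j, q)) by rewrite /= eqxx uS qS.
      have r2 : R (inr (j, q)) (inl (j, i0)) by rewrite /= eqxx qS Hi0.
      exact: ctrans (C1 _ _ r1) (C1 _ _ r2).
    pose P j' := [&& j' != j, inl (j', i) \notin S & [exists q', inr (j', q') \notin S]].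
    case: (pickP P) => [j' /and3P [ne j'S /existsP [q' q'S]] | none2].
      apply: ctrans _ (tri j').
      have r1 : R (inl (j, i)) (inl (j', i)) by rewrite /= eqxx uS j'S eq_sym ne.
      have r2 : R (inl (j', i)) (inr (j', q')) by rewrite /= eqxx j'S q'S.
      have r3 : R (inr (j', q')) (inl (j', i0)) by rewrite /= eqxx q'S Hi0.
      exact: ctrans (C1 _ _ r1) (ctrans (C1 _ _ r2) (C1 _ _ r3)).
    exfalso.
    pose q0 : 'I_s := Ordinal s0.
    pose a j' : Tt := if inl (j', i) \in S then inl (j', i) else inr (j', q0).
    have aS j' : j' != j -> a j' \in S.
      move=> ne; rewrite /a; case: ifP => // /negbT nS.
      move: (none2 j'); rewrite /P ne nS /= => /negbT; rewrite negb_exists.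
      by move/forallP/(_ q0)/negbNE.
    have aidx j' : idx (a j') = j' by rewrite /a; case: ifP.
    pose Bj : {set Tt} := [set inr (j, q) | q : 'I_s].
    pose A2 : {set Tt} := [set a j' | j' in [set~ j]].
    have cB : #|Bj| = s by rewrite card_imset ?card_ord // => q q' [->].
    have cA : #|A2| = 2.
      rewrite card_imset ?cardsC1 ?card_ord // => j1 j2 e12.
      by rewrite -(aidx j1) e12 aidx.
    have dis : Bj :&: A2 = set0.
      apply/setP => v; rewrite !inE; apply/negP => /andP [/imsetP [q _ ->]].
      case/imsetP => j' j'j; rewrite !inE in j'j.
      by move/(congr1 idx); rewrite aidx /= => ejj; rewrite ejj eqxx in j'j.
    have sub : Bj :|: A2 \subset S.
      rewrite subUset; apply/andP; split; apply/subsetP => v /imsetP [w wP ->].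
        by apply/negPn/negbT; exact: (none w).
      by apply: aS; move: wP; rewrite !inE.
    have := subset_leq_card sub; rewrite cardsU dis cards0 subn0 cB cA addn2.
    by rewrite leqNgt Ss.
  have r1 : R (inr (j, q)) (inl (j, i0)) by rewrite /= eqxx uS Hi0.
  exact: ctrans (C1 _ _ r1) (tri j).
apply: ctrans (hub x xS) _.
by rewrite (sym_connect_sym Rsym); apply: hub.
Qed.

Lemma Good_T : Good eT s.+2.
Proof.
split.
- by split; [exact: eT_sym | exact: eT_irr].
- exact: eT_conn.
- exact: eT_reg.
- rewrite card_sum !card_prod !card_ord.
  have -> : 3 * s.+2 + 3 * s = 2 * (3 * s + 3) by lia.
  by rewrite oddM.
exists Ost; split.
- by move=> O /imsetP [i _ ->]; case: (Ot_cycle i).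
- move=> O1 O2 /imsetP [i _ ->] /imsetP [i' _ ->] ne.
  rewrite (Ot_cycle i).2 (Ot_cycle i').2; apply: Kt_disj.
  by apply: contraNneq ne => ->.
- by move=> t F _ fF hit; apply: factor_bound fF hit.
Qed.

End Main.

Theorem theorem3p1 :
  forall r : nat, 3 <= r ->
  exists (n : nat) (e : rel 'I_n),
    [/\ simple_graph e, r_connected e r, regular e r, ~~ odd n &
    exists Os : {set {set {set 'I_n}}},
      [/\ forall O, O \in Os -> is_odd_cycle e O,
          forall O1 O2, O1 \in Os -> O2 \in Os -> O1 != O2 ->
            [disjoint cover O1 & cover O2]
        & forall (t : nat) (F : {set {set 'I_n}}),
            0 < t -> is_factor e t F ->
            (forall O, O \in Os -> F :&: O != set0) ->
            r <= 3 * t]].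
Proof.
case=> [|[|[|s]]] // _.
have G := Good_transfer (@enum_rankK (Tt s.+1)) (@enum_valK (Tt s.+1)) (Good_T (ltn0Sn s)).
do 2 eexists.
case: G => a b c d e; split; first exact: a.
- exact: b.
- exact: c.
- by rewrite card_ord in d.
- exact: e.
Qed.
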